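(* Let $X=\{a_1,\dots,a_\ell\}$ be a finite set of $\ell$ distinct points and $N\ge2$. For every $\gamma\in\mathcal{P}_{sym}(X^N)$ there exists a probability measure $\alpha$ on the finite set $\mathcal{P}_{\frac1N}(X)$ such that $$\gamma=\int_{\mathcal{P}_{\frac1N}(X)}\psi_N(\lambda)\,d\alpha(\lambda),$$ and for every $\mu\in\mathcal{P}_{N\text{-}rep}(X^2)$ there exists a probability measure $\alpha$ on $\mathcal{P}_{\frac1N}(X)$ such that $$\mu=\int_{\mathcal{P}_{\frac1N}(X)}\Big(\lambda\otimes\lambda+\frac1{N-1}\big(\lambda\otimes\lambda-\sum_{i=1}^\ell\lambda_i\delta_i\otimes\delta_i\big)\Big)\,d\alpha(\lambda).$$
   Context: $\mathcal{P}(X)$ denotes probability measures on $X$, identified with vectors $(\lambda_i)$, $\lambda_i=\lambda(\{a_i\})$; $\delta_i$ is the Dirac measure at $a_i$; $\mathcal{P}_{\frac1N}(X)=\{\lambda\in\mathcal{P}(X):\lambda_i\in\frac1N\mathbb{Z}\ \forall i\}$. The symmetrization operator is $(S\gamma)(A_1\times\cdots\times A_N)=\frac1{N!}\sum_{\sigma\in S_N}\gamma(A_{\sigma(1)}\times\cdots\times A_{\sigma(N)})$; $\mathcal{P}_{sym}(X^N)$ is the set of probability measures $\gamma$ on $X^N$ with $S\gamma=\gamma$. A probability measure $\mu$ on $X^2$ is $N$-representable if $\mu(A)=\gamma(A\times X^{N-2})$ for all $A\subseteq X^2$ for some $\gamma\in\mathcal{P}_{sym}(X^N)$; $\mathcal{P}_{N\text{-}rep}(X^2)$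 is the set of these. For $\lambda\in\mathcal{P}_{\frac1N}(X)$, $\psi_N(\lambda)=S(\delta_{a_{i_1}}\otimes\cdots\otimes\delta_{a_{i_N}})$ where $i_1\le\dots\le i_N$ is the nondecreasing index sequence in which each $i$ appears exactly $N\lambda_i$ times (equivalently, $\psi_N(\lambda)$ is the unique extreme point of $\mathcal{P}_{sym}(X^N)$ with one-point marginal $\lambda$). *)

(* Defs.v *)
(* X = {a_1,...,a_l} is modelled by the finite type 'I_l
   (points are distinct by construction). A (probability) measure on a
   finite set is given by its point masses. *)
From HB Require Import structures.
From mathcomp Require Import all_boot all_order all_algebra all_fingroup.
From mathcomp Require Import reals.
Set Implicit Arguments. Unset Strict Implicit. Unset Printing Implicit Defensive.
Import Order.TTheory GRing.Theory Num.Theory.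
Local Open Scope ring_scope.

Section Defs.
Variable R : realType.

Definition is_prob (T : finType) (p : T -> R) : Prop :=
  (forall t, 0 <= p t) /\ \sum_t p t = 1.

Definition pt (N l : nat) := {ffun 'I_N -> 'I_l}.

Definition symz (N l : nat) (g : pt N l -> R) : pt N l -> R :=
  fun x => (N`!%:R)^-1 * \sum_(s : 'S_N) g [ffun j => x (s j)].

Definition Psym (N l : nat) (g : pt N l -> R) : Prop :=
  is_prob g /\ forall x, symz g x = g x.

(* two-point marginal mu(A) = g(A x X^{N-2}), on points of X^2 *)
Definition marg2 (N l : nat) (g : pt N l -> R) (i j : 'I_l) : R :=
  \sum_(x : pt N l | [forall k : 'I_N,
          ((val k == 0%N) ==> (x k == i)) && ((val k == 1%N) ==> (x k == j))])
     g x.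

Definition Nrep (N l : nat) (mu : 'I_l * 'I_l -> R) : Prop :=
  is_prob mu /\
  exists g : pt N l -> R, Psym g /\ forall i j, mu (i, j) = marg2 g i j.

(* P_{1/N}(X): lambda with lambda_i = k_i / N, k_i natural, sum k_i = N.
   Elements are represented by their count vectors k (a bijective encoding). *)
Definition lamIdx (N l : nat) :=
  {k : {ffun 'I_l -> 'I_N.+1} | (\sum_i (k i : nat))%N == N}.

Definition lam (N l : nat) (k : lamIdx N l) (i : 'I_l) : R :=
  ((val k i : nat)%:R) / N%:R.

Definition idxseq (N l : nat) (k : lamIdx N l) : seq nat :=
  flatten [seq nseq (val k i : nat) (i : nat) | i <- enum 'I_l].

Definition diracN (N l : nat) (s : seq nat) (x : pt N l) : R :=
  if [forall j : 'I_N, (x j : nat) == nth 0%N s j] then 1 else 0.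

Definition psiN (N l : nat) (k : lamIdx N l) : pt N l -> R :=
  symz (diracN (idxseq k)).

End Defs.

(* Main.v *)
Require Import Defs.
From HB Require Import structures.
From mathcomp Require Import all_boot all_order all_algebra all_fingroup.
From mathcomp Require Import reals ring.
Import Order.TTheory GRing.Theory Num.Theory.
Local Open Scope ring_scope.

Set Implicit Arguments. Unset Strict Implicit. Unset Printing Implicit Defensive.

Section Aux.
Variables (N l : nat).

Definition cntn (y : pt N l) (i : 'I_l) : nat := #|[pred j | y j == i]|.

Lemma cntn_lt y i : (cntn y i < N.+1)%N.
Proof. by rewrite ltnS /cntn; apply: leq_trans (max_card _) _; rewrite card_ord. Qed.

Definition cntf (y : pt N l) : {ffun 'I_l -> 'I_N.+1} :=
  [ffun i => Ordinal (cntn_lt y i)].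

Lemma cnt_sum y : (\sum_i (cntf y i : nat))%N == N.
Proof.
apply/eqP.
rewrite -[RHS](card_ord N) -sum1_card (partition_big y xpredT) //=.
apply: eq_bigr => i _; rewrite ffunE /= /cntn -sum1_card.
by apply: eq_bigl => j.
Qed.

Definition cnt (y : pt N l) : lamIdx N l := exist _ (cntf y) (cnt_sum y).

Lemma cnt_val y i : (val (cnt y) i : nat) = cntn y i.
Proof. by rewrite /= ffunE. Qed.

Lemma sum_cnt (a : pred nat) (y : pt N l) :
  (\sum_(j < N) a (y j) = \sum_(i < l) a i * cntn y i)%N.
Proof.
rewrite (partition_big y xpredT) //=.
apply: eq_bigr => i _.
rewrite (eq_bigr (fun _ => (a i : nat))); last by move=> j; rewrite ?andTb => /eqP ->.
rewrite sum_nat_const /cntn mulnC; congr (_ * _)%N.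
Qed.

Lemma idx_perm (y : pt N l) :
  exists p : {perm 'I_N}, forall j : 'I_N, nth 0%N (idxseq (cnt y)) j = y (p j).
Proof.
have : perm_eq (idxseq (cnt y)) [tuple (y j : nat) | j < N].
  apply/seq.permP => a.
  rewrite /idxseq count_flatten -map_comp sumnE big_map big_enum /=.
  under eq_bigr => i _ do rewrite count_nseq ffunE /=.
  change (count a [seq (y j : nat) | j <- enum 'I_N]) with (count a [seq (y j : nat) | j <- enum 'I_N]).
  rewrite count_map -sum1_count big_enum_cond [RHS]big_mkcond /=.
  rewrite (eq_bigr (fun j => a (y j) : nat)); last by move=> j _; case: ifP.
  rewrite sum_cnt.
  apply: eq_bigl => i; rewrite ?mem_enum ?mem_ord_enum ?inE //.
case/tuple_permP => p hp; exists p => j.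
by rewrite hp -[nth _ _ _](tnth_nth 0%N) !tnth_mktuple.
Qed.

End Aux.

Section R.
Variables (R : realType) (N l : nat).

Lemma sym_inv (g : pt N l -> R) (hg : forall x, symz g x = g x) (p : {perm 'I_N}) (x : pt N l) :
  g [ffun j => x (p j)] = g x.
Proof.
rewrite -hg -[RHS]hg /symz; congr (_ * _).
rewrite [RHS](reindex_inj (mulIg p)) /=.
apply: eq_bigr => s _; congr (g _); apply/ffunP => j; rewrite !ffunE permM.
done.
Qed.

Lemma psi_cnt (y x : pt N l) :
  psiN R (cnt y) x = (N`!%:R)^-1 * \sum_(r : {perm 'I_N}) (([ffun m => x (r m)] == y)%:R : R).
Proof.
have [p hp] := idx_perm y.
rewrite /psiN /symz; congr (_ * _).
rewrite (reindex_inj (mulgI p)) /=.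
apply: eq_bigr => r _; rewrite /diracN.
have -> : [forall j, ([ffun j0 => x ((p * r)%g j0)] j : nat) == nth 0%N (idxseq (cnt y)) j]
   = ([ffun m => x (r m)] == y).
  apply/forallP/eqP.
    move=> h; apply/ffunP => m; rewrite ffunE; apply/val_inj => /=.
    have := h (p^-1 m)%g; rewrite hp ffunE permM !permKV.
    by move/eqP.
  by move=> e j; rewrite hp -e !ffunE permM.
by case: (_ == _).
Qed.


Definition alphaOf (g : pt N l -> R) (k : lamIdx N l) : R := \sum_(y | cnt y == k) g y.

Lemma alpha_prob g : is_prob g -> is_prob (alphaOf g).
Proof.
case=> h0 h1; split.
  by move=> k; apply: sumr_ge0 => y _; exact: h0.
by rewrite -h1 [RHS](partition_big (@cnt N l) xpredT).
Qed.

Lemma sum_alpha g (F : lamIdx N l -> R) :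
  \sum_k alphaOf g k * F k = \sum_y g y * F (cnt y).
Proof.
rewrite [RHS](partition_big (@cnt N l) xpredT) //=.
apply: eq_bigr => k _; rewrite mulr_suml; apply: eq_bigr => y.
by rewrite ?andTb => /eqP ->.
Qed.

Lemma sum_pick (g : pt N l -> R) z : \sum_y g y * ((z == y)%:R) = g z.
Proof.
rewrite (bigD1 z) //= eqxx mulr1 big1 ?addr0 // => y.
by rewrite eq_sym => /negbTE ->; rewrite mulr0.
Qed.

Lemma part1 g : Psym g -> forall x : pt N l, g x = \sum_k alphaOf g k * psiN R k x.
Proof.
case=> _ hs x.
rewrite sum_alpha.
under eq_bigr => y _ do rewrite psi_cnt mulrCA.
rewrite -mulr_sumr.
under eq_bigr => y _ do rewrite mulr_sumr.
rewrite exchange_big /=.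
under eq_bigr => r _ do rewrite sum_pick.
by rewrite -[LHS]hs.
Qed.

End R.

Section Two.
Variables (R : realType) (N l : nat) (hN : (1 < N)%N).
Variables (g : pt N l -> R) (hs : forall x, symz g x = g x) (i j : 'I_l).

Let o0 : 'I_N := Ordinal (ltnW hN).
Let o1 : 'I_N := Ordinal hN.

Definition M (a b : 'I_N) : R := \sum_x g x * ((x a == i) && (x b == j))%:R.

Lemma marg2E : marg2 g i j = M o0 o1.
Proof.
rewrite /marg2 /M big_mkcond; apply: eq_bigr => x _.
have -> : [forall k : 'I_N, ((val k == 0%N) ==> (x k == i)) && ((val k == 1%N) ==> (x k == j))]
   = (x o0 == i) && (x o1 == j).
  apply/forallP/andP.
    move=> h; split.
      by have /andP [/implyP H _] := h o0; apply: H.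
    by have /andP [_ /implyP H] := h o1; apply: H.
  case=> e0 e1 k; apply/andP; split; apply/implyP => /eqP hk.
    by have -> : k = o0 by apply: val_inj.
  by have -> : k = o1 by apply: val_inj.
by case: (_ && _); rewrite ?mulr1 ?mulr0.
Qed.

Lemma M_inv a b : a != b -> M a b = M o0 o1.
Proof.
move=> hab.
pose c := tperm o0 a o1.
pose pi : {perm 'I_N} := (tperm o0 a * tperm c b)%g.
have h0 : pi o0 = a.
  have hca : c != a.
    rewrite /c; apply/eqP => e.
    have : tperm o0 a o1 = tperm o0 a o0 by rewrite tpermL.
    by move/perm_inj/(congr1 val).
  by rewrite /pi permM tpermL tpermD // eq_sym.
have h1 : pi o1 = b by rewrite /pi permM -/c tpermL.
have hinj : injective (fun x : pt N l => [ffun m => x (pi m)]).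
  move=> x1 x2 /ffunP e; apply/ffunP => m.
  by have := e (pi^-1 m)%g; rewrite !ffunE permKV.
rewrite /M [RHS](reindex_inj hinj) /=; apply: eq_bigr => x _.
by rewrite sym_inv // !ffunE h0 h1.
Qed.


Lemma cntR (x : pt N l) k : (cntn x k)%:R = \sum_a ((x a == k)%:R : R).
Proof.
rewrite /cntn -sum1_card natr_sum big_mkcond /=; apply: eq_bigr => a _.
by rewrite inE; case: (_ == _).
Qed.

Lemma inner (x : pt N l) :
  \sum_a \sum_(b | b != a) ((((x a == i) && (x b == j))%:R) : R)
  = (cntn x i)%:R * (cntn x j)%:R - (i == j)%:R * (cntn x i)%:R.
Proof.
have e : forall a : 'I_N, \sum_(b | b != a) ((((x a == i) && (x b == j))%:R) : R)
   = \sum_b (((x a == i) && (x b == j))%:R : R) - ((x a == i) && (x a == j))%:R.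
  by move=> a; rewrite [in RHS](bigD1 a) //= addrC addrK.
under eq_bigr => a _ do rewrite e.
rewrite sumrB; congr (_ - _).
  rewrite !cntR mulr_suml; apply: eq_bigr => a _.
  rewrite mulr_sumr; apply: eq_bigr => b _.
  by rewrite -natrM mulnb.
rewrite cntR mulr_sumr; apply: eq_bigr => a _.
have [<-|nij] := eqVneq i j; first by rewrite andbb mul1r.
rewrite mul0r; case e1: (x a == i) => //=.
by rewrite (eqP e1) (negbTE nij).
Qed.


Lemma M_formula : (N%:R * (N%:R - 1)) * M o0 o1 =
  \sum_x g x * ((cntn x i)%:R * (cntn x j)%:R - (i == j)%:R * (cntn x i)%:R).
Proof.
have E1 : \sum_a \sum_(b | b != a) M a b =
  \sum_x g x * ((cntn x i)%:R * (cntn x j)%:R - (i == j)%:R * (cntn x i)%:R).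
  rewrite /M.
  under eq_bigr => a _ do rewrite exchange_big /=.
  rewrite exchange_big /=.
  apply: eq_bigr => x _; rewrite -inner mulr_sumr; apply: eq_bigr => a _.
  by rewrite mulr_sumr.
rewrite -E1.
have e : forall a : 'I_N, \sum_(b | b != a) M a b = M o0 o1 *+ N - M o0 o1.
  move=> a; rewrite (eq_bigr (fun _ => M o0 o1)); last first.
    by move=> b hb; rewrite (M_inv (a:=a) (b:=b)) // eq_sym.
  have h : \sum_(b : 'I_N) M o0 o1 = M o0 o1 + \sum_(b | b != a) M o0 o1.
    by rewrite (bigD1 a).
  by move: h; rewrite sumr_const card_ord => ->; rewrite addrC addKr.
under eq_bigr => a _ do rewrite e.
rewrite sumr_const card_ord.
ring.
Qed.

End Two.

Unset Implicit Arguments. Set Strict Implicit.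

Theorem lemma4p1 (R : realType) (l N : nat) (hN : (2 <= N)%N) :
  (forall g : pt N l -> R, Psym g ->
     exists alpha : lamIdx N l -> R, is_prob alpha /\
       forall x : pt N l, g x = \sum_(k : lamIdx N l) alpha k * psiN R k x) /\
  (forall mu : 'I_l * 'I_l -> R, Nrep N mu ->
     exists alpha : lamIdx N l -> R, is_prob alpha /\
       forall i j : 'I_l,
         mu (i, j) = \sum_(k : lamIdx N l) alpha k *
           (lam R k i * lam R k j
            + (N%:R - 1)^-1 * (lam R k i * lam R k j
                               - (if i == j then lam R k i else 0)))).
Proof.
split.
  move=> g hg; exists (alphaOf g); split; first by apply: alpha_prob; case: hg.
  exact: part1.
move=> mu [_ [g [hg hm]]]; exists (alphaOf g); split.
  by apply: alpha_prob; case: hg.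
move=> i j; rewrite hm (marg2E hN).
have hs : forall x, symz g x = g x by case: hg.
have n0 : (N%:R : R) != 0 by rewrite pnatr_eq0 -lt0n; apply: ltnW.
have n1 : (N%:R : R) - 1 != 0.
  by rewrite subr_eq0 pnatr_eq1; apply/eqP => e; move: hN; rewrite e.
have n2 : (N%:R : R) * (N%:R - 1) != 0 by rewrite mulf_neq0.
rewrite -[LHS](mulKf n2) (M_formula hN hs) sum_alpha mulr_sumr.
apply: eq_bigr => x _; rewrite mulrCA; congr (g x * _).
rewrite /lam !cnt_val.
have [<-|nij] := eqVneq i j.
  rewrite (_ : (true%:R : R) = 1) // mul1r; field.
  by rewrite n0 n1.
rewrite (_ : (false%:R : R) = 0) // mul0r subr0 subr0; field.
by rewrite n0 n1.
Qed.
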